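(* Let $g:\mathbb R\times\mathbb R_+\to\mathbb R_+$ be non-decreasing and locally Lipschitz in each of its variables, with $g(0,0)=0$ and $\int_1^\infty s^{-1-p}g(s,s^{p/q})\,ds<\infty$ for some $p,q>0$. Let $u:\Omega\to\mathbb R$ and $v:\Omega\to\mathbb R_+$ be measurable; for $s>0$ and $w\in\{u,v\}$ set $E_w(s):=\{x\in\Omega:|w(x)|>s\}$ and $e_w(s):=\int_{E_w(s)}\phi_\mu\,dx$. Assume there are constants $C_u,C_v>0$ such that $e_u(s)\le C_us^{-p}$ and $e_v(s)\le C_vs^{-q}$ for all $s>0$. Then for every $s_0>0$, $$\|g(u,v)\|_{L^1(\Omega;\phi_\mu)}\le\int_{E_u^c(s_0)\cap E_v^c(s_0^{p/q})}g(u,v)\phi_\mu\,dx+2p(C_u+C_v)\int_{s_0}^\infty s^{-1-p}g(s,s^{p/q})\,ds.$$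
   Context: $\Omega\subset\mathbb R^N$ ($N\ge3$) is a bounded $C^2$ domain, $\Sigma\subset\partial\Omega$ a compact $C^2$ submanifold without boundary of dimension $k$, $d_\Sigma=\mathrm{dist}(\cdot,\Sigma)$, $\mu\le((N-k)/2)^2$, $L_\mu=\Delta+\mu d_\Sigma^{-2}$ with positive first Dirichlet eigenvalue $\lambda_\mu$, and $\phi_\mu>0$ the associated first eigenfunction; $L^1(\Omega;\phi_\mu)$ is the $L^1$ space with weight $\phi_\mu\,dx$. Complements $E^c$ are taken in $\Omega$. *)

(* Defs.v *)
From HB Require Import structures.
From mathcomp Require Import all_boot all_order all_algebra.
From mathcomp Require Import all_classical all_reals all_analysis.
Set Implicit Arguments. Unset Strict Implicit. Unset Printing Implicit Defensive.
Import Order.TTheory GRing.Theory Num.Theory.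
Local Open Scope classical_set_scope.
Local Open Scope ring_scope.

Definition locLip_on (R : realType) (D : set R) (f : R -> R) : Prop :=
  forall M : R, 0 < M -> exists L : R, forall x y : R,
    D x -> D y -> `|x| <= M -> `|y| <= M -> `|f x - f y| <= L * `|x - y|.

Definition Eset (d : measure_display) (T : measurableType d) (R : realType)
  (Omega : set T) (w : T -> R) (s : R) : set T :=
  [set x | Omega x /\ s < `|w x|].

Definition eweight (d : measure_display) (T : measurableType d) (R : realType)
  (mu : {measure set T -> \bar R}) (phi : T -> R)
  (Omega : set T) (w : T -> R) (s : R) : \bar R :=
  (\int[mu]_(x in Eset Omega w s) (phi x)%:E)%E.

(* Main.v *)
Require Import Defs.
From HB Require Import structures.
From mathcomp Require Import all_boot all_order all_algebra.
From mathcomp Require Import all_classical all_reals all_analysis.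
From mathcomp Require Import measurable_realfun.
From mathcomp Require Import ring lra.
Import Order.TTheory GRing.Theory Num.Theory.
Local Open Scope classical_set_scope.
Local Open Scope ring_scope.
Lemma int_powR (R : realType) (p a b : R) : 0 < p -> 0 < a -> a < b ->
  (\int[lebesgue_measure]_(x in `[a, b[) (x `^ (-1 - p))%:E
    = ((a `^ (-p) - b `^ (-p)) / p)%:E)%E.
Proof.
move=> p0 a0 ab.
pose F := (fun y : R => (- p^-1) * y `^ (- p)).
have dF : forall x : R, 0 < x -> is_derive x 1 F (x `^ (-1 - p)).
  move=> x x0.
  have := is_deriveZ (- p^-1) (is_derive1_powR (- p) x0).
  rewrite /GRing.scale /= mulrA mulNr mulrN opprK mulVf ?gt_eqF // mul1r addrC.
  by move=> h; apply: h.
have dP : forall x : R, 0 < x -> derivable (fun y : R => y `^ (-1 - p)) x 1.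
  by move=> x x0; apply: derivable_powR; rewrite in_itv /= x0.
rewrite integral_itv_bndo_bndc; last first.
  apply/measurable_EFinP; apply: measurable_funS (measurable_powR _) => //.
rewrite (@continuous_FTC2 _ _ F) //.
- rewrite /F -EFinB; congr EFin; field; exact: lt0r_neq0.
- apply: derivable_within_continuous => x; rewrite in_itv /= => /andP[ax _].
  apply: dP; exact: lt_le_trans ax.
- split.
  + move=> x; rewrite in_itv /= => /andP[ax _].
    by have [] := dF x (lt_trans a0 ax).
  + apply: cvg_at_right_filter.
    apply/differentiable_continuous; rewrite -derivable1_diffP.
    by have [] := dF a a0.
  + apply: cvg_at_left_filter.
    apply/differentiable_continuous; rewrite -derivable1_diffP.
    by have [] := dF b (lt_trans a0 ab).
- move=> x; rewrite in_itv /= => /andP[ax _].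
  rewrite derive1E; apply: derive_val.
  exact: dF (lt_trans a0 ax).
Qed.
Lemma meas_guv (R : realType) (d : measure_display) (T : measurableType d)
  (Omega : set T) (g : R -> R -> R) (u v : T -> R) :
  measurable Omega -> measurable_fun Omega u -> measurable_fun Omega v ->
  (forall x, Omega x -> 0 <= v x) ->
  (forall s1 s2 t, 0 <= t -> s1 <= s2 -> g s1 t <= g s2 t) ->
  (forall s t1 t2, 0 <= t1 -> t1 <= t2 -> g s t1 <= g s t2) ->
  (forall t, 0 <= t -> locLip_on setT (fun s => g s t)) ->
  measurable_fun Omega (fun x => g (u x) (v x)).
Proof.
move=> mO mu mv v0 gs gt gL _.
apply: (measurability _ (RGenOInfty.measurableE R)) => //.
move=> /= _ [_ [a ->] <-]; rewrite preimage_itvoy.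
have mr : forall r : R, measurable_fun Omega (fun x => g r (Num.max (v x) 0)).
  move=> r.
  have h : measurable_fun setT (fun t : R => g r (Num.max t 0)).
    apply: nondecreasing_measurable => // t1 t2 t12.
    apply: gt; first by rewrite le_max lexx orbT.
    by rewrite ge_max !le_max t12 lexx /= orbT.
  exact: (measurableT_comp h mv).
rewrite [X in measurable X](_ : _ = \bigcup_(q : rat)
  ((Omega `&` [set x | ratr q < u x]) `&`
   (Omega `&` [set x | a < g (ratr q) (Num.max (v x) 0)]))).
  apply: bigcupT_measurable_rat => q; apply: measurableI.
  - by rewrite -preimage_itvoy; apply: mu => //; exact: measurable_itv.
  - by rewrite -preimage_itvoy; apply: (mr (ratr q)) => //; exact: measurable_itv.
rewrite predeqE => x; split => [[Ox] /= agx|[r _] [[Ox /= ru] [_ /= agr]]]; last first.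
  split => //; apply: (lt_le_trans agr).
  have -> : Num.max (v x) 0 = v x by apply/max_idPl; exact: v0.
  by apply: gs; [exact: v0|exact: ltW].
have vx0 := v0 x Ox.
have [L HL] := gL (v x) vx0 (`|u x| + 1) (ltr_pwDr ltr01 (normr_ge0 _)).
pose e := g (u x) (v x) - a.
have e0 : 0 < e by rewrite subr_gt0.
pose del := Num.min 1 (e / (`|L| + 1)).
have del0 : 0 < del by rewrite lt_min ltr01 divr_gt0 // ltr_pwDr.
have := @rat_in_itvoo R (u x - del) (u x).
case; first by rewrite ltrBlDr ltrDl.
move=> q; rewrite in_itv /= => /andP[lq qu].
exists q => //; split; split => //=.
have -> : Num.max (v x) 0 = v x by apply/max_idPl.
have uq : `|u x - ratr q| < del.
  by rewrite gtr0_norm ?subr_gt0 // ltrBlDl addrC -ltrBlDl.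
have del1 : del <= 1 by rewrite /del ge_min lexx.
have qM : `|ratr q : R| <= `|u x| + 1.
  have -> : (ratr q : R) = u x - (u x - ratr q) by ring.
  apply: (le_trans (ler_normB _ _)); rewrite lerD2l.
  by apply: le_trans del1; apply: ltW.
have Hu : `|u x| <= `|u x| + 1 by rewrite lerDl.
have H := HL (u x) (ratr q) I I Hu qM.
have h1 : g (u x) (v x) - g (ratr q) (v x) <= L * `|u x - ratr q|.
  exact: le_trans (ler_norm _) H.
have h2 : L * `|u x - ratr q| <= `|L| * `|u x - ratr q|.
  by rewrite ler_wpM2r // ler_norm.
have h3 : `|L| * `|u x - ratr q| <= `|L| * (e / (`|L| + 1)).
  rewrite ler_wpM2l //; apply: (le_trans (ltW uq)).
  by rewrite /del ge_min lexx orbT.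
have h4 : `|L| * (e / (`|L| + 1)) < e.
  rewrite mulrA ltr_pdivrMr ?ltr_pwDr //.
  by rewrite mulrC ltr_pM2l // ltrDl.
rewrite /e in h3 h4; lra.
Qed.
Lemma meas_k (R : realType) (g : R -> R -> R) (p q : R) (D : set R) :
  measurable D -> (forall x, D x -> 0 <= x) -> 0 < p -> 0 < q ->
  (forall s1 s2 t, 0 <= t -> s1 <= s2 -> g s1 t <= g s2 t) ->
  (forall s t1 t2, 0 <= t1 -> t1 <= t2 -> g s t1 <= g s t2) ->
  measurable_fun D (fun s => s `^ (-1 - p) * g s (s `^ (p / q))).
Proof.
move=> mD D0 p0 q0 gs gt.
apply: measurable_funM; first exact: measurable_funS (measurable_powR _).
pose hh := fun s : R => g (Num.max s 0) ((Num.max s 0) `^ (p / q)).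
apply: (eq_measurable_fun hh).
  move=> x; rewrite inE => Dx.
  by rewrite /hh; have -> : Num.max x 0 = x by apply/max_idPl; exact: D0.
apply: nondecreasing_measurable => // s t st.
have ms : Num.max s 0 <= Num.max t 0.
  by rewrite ge_max !le_max st lexx /= orbT.
have m0 : 0 <= Num.max s 0 by rewrite le_max lexx orbT.
apply: (le_trans (gs _ _ _ (powR_ge0 _ _) ms)).
apply: gt; first exact: powR_ge0.
have pq : 0 <= p / q by rewrite divr_ge0 // ltW.
have := @ge0_ler_powR R _ pq (Num.max s 0) (Num.max t 0).
rewrite !nnegrE m0 (le_trans m0 ms) => /(_ isT isT ms).
by [].
Qed.

Lemma abel (R : realType) (H a : nat -> R) :
  (forall j, 0 <= H j) -> (forall j, H j <= H j.+1) -> (forall j, 0 <= a j) ->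
  (forall j, a j = 2 * a j.+1) ->
  (\sum_(j <oo) ((H j.+1 - (if j is 0 then 0 else H j)) * a j)%:E
     <= \sum_(j <oo) (H j * a j)%:E)%E.
Proof.
move=> H0 Hnd a0 a2.
have d0 : forall j, 0 <= H j.+1 - (if j is 0 then 0 else H j).
  by case=> [|j]; rewrite ?subr0 ?subr_ge0.
have b0 : forall j, (0 <= (H j * a j)%:E)%E by move=> j; rewrite lee_fin; exact: mulr_ge0 (H0 _) (a0 _).
have b'0 : forall j, (0 <= ((if j is 0 then 0 else H j) * a j)%:E)%E.
  by case=> [|j]; rewrite lee_fin ?mul0r // mulr_ge0.
set X := (\sum_(j <oo) _)%E.
pose Y := (\sum_(j <oo) (H j.+1 * a j.+1)%:E)%E.
have Y'Y : (\sum_(j <oo) ((if j is 0 then 0 else H j) * a j)%:E)%E = Y.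
  rewrite nneseries_recl // mul0r add0e -nneseries_addn; last first.
    by move=> i; apply: b'0.
  by apply: eq_eseriesr => i _; rewrite addn1.
have Y0 : (Y <= \sum_(j <oo) (H j * a j)%:E)%E.
  rewrite nneseries_recl // -nneseries_addn //.
  have -> : (\sum_(i <oo) (H (i + 1)%N * a (i + 1)%N)%:E)%E = Y.
    by apply: eq_eseriesr => i _; rewrite addn1.
  by rewrite leeDr.
apply: le_trans Y0.
have XY : (X + Y = 2%:E * Y)%E.
  rewrite -{1}Y'Y -nneseriesD; last 2 first.
  - by move=> i _ _; rewrite lee_fin; exact: mulr_ge0 (d0 _) (a0 _).
  - by move=> i _ _; exact: b'0.
  rewrite /Y -nneseriesZl; last by move=> i _; rewrite lee_fin; exact: mulr_ge0 (H0 _) (a0 _).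
  apply: eq_eseriesr => j _; rewrite -EFinD -EFinM; congr EFin.
  by rewrite -mulrDl subrK a2 mulrCA.
have Yge0 : (0 <= Y)%E by apply: nneseries_ge0 => i _ _; rewrite lee_fin; exact: mulr_ge0 (H0 _) (a0 _).
clear Y'Y; move: XY; case: Y Yge0 => [r _| _ _|//]; last by rewrite leey.
move=> XY; have : X = ((X + r%:E) - r%:E)%E by rewrite addeK.
by rewrite XY -EFinM -EFinB => ->; rewrite lee_fin; lra.
Qed.

Lemma h_mono (R : realType) (g : R -> R -> R) (r : R) : 0 <= r ->
  (forall s1 s2 t, 0 <= t -> s1 <= s2 -> g s1 t <= g s2 t) ->
  (forall s t1 t2, 0 <= t1 -> t1 <= t2 -> g s t1 <= g s t2) ->
  forall t1 t2, 0 <= t1 -> t1 <= t2 -> g t1 (t1 `^ r) <= g t2 (t2 `^ r).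
Proof.
move=> r0 gs gt t1 t2 t10 t12.
apply: (le_trans (gs _ _ _ (powR_ge0 _ _) t12)).
apply: gt; first exact: powR_ge0.
have := @ge0_ler_powR R _ r0 t1 t2.
by rewrite !nnegrE t10 (le_trans t10 t12) => /(_ isT isT t12).
Qed.

Lemma geom_props (R : realType) (p s0 : R) : 0 < p -> 0 < s0 ->
  let c2 := 2 `^ p^-1 in
  let s := fun j : nat => s0 * c2 ^+ j in
  [/\ 1 < c2, (forall j, 0 < s j), (forall i n, s i <= s (i + n)%N),
      (forall j, s j `^ (-p) = 2 * s j.+1 `^ (-p)) &
      (forall M, exists j, M < s j)].
Proof.
move=> p0 s00 c2 s.
have c20 : 0 < c2 by rewrite powR_gt0.
have c2p : c2 `^ p = 2.
  by rewrite /c2 -powRrM mulVf ?gt_eqF // powRr1.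
have c21 : 1 < c2.
  rewrite ltNge; apply/negP => c21.
  have := @ge0_ler_powR R _ (ltW p0) c2 1.
  rewrite !nnegrE (ltW c20) ler01 => /(_ isT isT c21).
  by rewrite c2p powR1; lra.
have sp : forall j, 0 < s j by move=> j; rewrite mulr_gt0 // exprn_gt0.
split => //.
- move=> i; elim=> [|n IH]; first by rewrite addn0.
  apply: (le_trans IH); rewrite /s addnS exprS ler_wpM2l ?(ltW s00) //.
  by rewrite ler_peMl ?(ltW c21) // exprn_ge0 // ltW.
- move=> j; have -> : s j.+1 = s j * c2 by rewrite /s exprSr mulrA.
  rewrite powRM ?(ltW c20) ?(ltW (sp j)) //.
  have -> : c2 `^ (- p) = 2^-1 by rewrite powRN c2p.
  by field.
- have bern : forall j : nat, 1 + j%:R * (c2 - 1) <= c2 ^+ j.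
    elim=> [|j IH]; first by rewrite mul0r addr0 expr0.
    rewrite exprS; apply: (le_trans _ (ler_wpM2l (ltW c20) IH)).
    rewrite -natr1.
    have -> : c2 * (1 + j%:R * (c2 - 1)) =
              1 + (j%:R + 1) * (c2 - 1) + j%:R * (c2 - 1) ^+ 2 by ring.
    by rewrite lerDl mulr_ge0 // sqr_ge0.
  move=> M; exists (Num.Def.trunc (M / (s0 * (c2 - 1)))).+1.
  set j := (Num.Def.trunc _).+1.
  have hj : M / (s0 * (c2 - 1)) < j%:R by exact: truncnS_gt.
  have hc : 0 < s0 * (c2 - 1) by rewrite mulr_gt0 // subr_gt0.
  rewrite ltr_pdivrMr // in hj.
  have bj : s0 * (1 + j%:R * (c2 - 1)) <= s0 * c2 ^+ j.
    by rewrite ler_wpM2l // ltW.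
  apply: (lt_le_trans hj); apply: le_trans bj.
  have -> : s0 * (1 + j%:R * (c2 - 1)) = s0 + j%:R * (s0 * (c2 - 1)) by ring.
  by rewrite lerDr ltW.
Qed.

Theorem lemma2p6 (R : realType) (d : measure_display) (T : measurableType d)
  (mu : {measure set T -> \bar R}) (Omega : set T) (phi : T -> R)
  (g : R -> R -> R) (p q : R) (u v : T -> R) (Cu Cv : R) :
  measurable Omega ->
  measurable_fun Omega phi -> (forall x, Omega x -> 0 < phi x) ->
  (forall s t, 0 <= t -> 0 <= g s t) ->
  (forall s1 s2 t, 0 <= t -> s1 <= s2 -> g s1 t <= g s2 t) ->
  (forall s t1 t2, 0 <= t1 -> t1 <= t2 -> g s t1 <= g s t2) ->
  (forall t, 0 <= t -> locLip_on setT (fun s => g s t)) ->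
  (forall s, locLip_on [set t | 0 <= t] (fun t => g s t)) ->
  g 0 0 = 0 ->
  0 < p -> 0 < q ->
  (\int[lebesgue_measure]_(s in `[1%R, +oo[%classic)
     (s `^ (- 1 - p) * g s (s `^ (p / q)))%:E < +oo)%E ->
  measurable_fun Omega u -> measurable_fun Omega v ->
  (forall x, Omega x -> 0 <= v x) ->
  0 < Cu -> 0 < Cv ->
  (forall s, 0 < s -> (eweight mu phi Omega u s <= (Cu * s `^ (- p))%:E)%E) ->
  (forall s, 0 < s -> (eweight mu phi Omega v s <= (Cv * s `^ (- q))%:E)%E) ->
  forall s0 : R, 0 < s0 ->
  (\int[mu]_(x in Omega) (`|g (u x) (v x)| * phi x)%:E
   <= \int[mu]_(x in Omega `&` (Omega `\` Eset Omega u s0)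
                           `&` (Omega `\` Eset Omega v (s0 `^ (p / q))))
          (g (u x) (v x) * phi x)%:E
      + (2 * p * (Cu + Cv))%:E *
        \int[lebesgue_measure]_(s in `[s0, +oo[%classic)
          (s `^ (- 1 - p) * g s (s `^ (p / q)))%:E)%E.
Proof.
move=> mO mphi phi0 g0 gs gt gLs _ _ p0 q0 _ mu_ mv v0 Cu0 Cv0 eu ev s0 s00.
have r0 : 0 <= p / q by rewrite divr_ge0 // ltW.
have [c21 sp s_nd aS s_unb] := @geom_props R p s0 p0 s00.
set c2 := 2 `^ p^-1 in c21 sp s_nd aS s_unb.
set s := (fun j : nat => s0 * c2 ^+ j) in sp s_nd aS s_unb.
have s0E : s 0%N = s0 by rewrite /s expr0 mulr1.
have s_le : forall i j, (i <= j)%N -> s i <= s j.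
  by move=> i j /subnKC <-; apply: s_nd.
pose a (j : nat) := s j `^ (- p).
pose H (j : nat) := g (s j) (s j `^ (p / q)).
pose del (j : nat) := H j.+1 - (if j is 0 then 0 else H j).
pose S (j : nat) := Eset Omega u (s j) `|` Eset Omega v (s j `^ (p / q)).
pose k := fun t : R => t `^ (-1 - p) * g t (t `^ (p / q)).
have a0 : forall j, 0 <= a j by move=> j; exact: powR_ge0.
have H0 : forall j, 0 <= H j by move=> j; apply: g0; exact: powR_ge0.
have Hnd : forall j, H j <= H j.+1.
  move=> j; rewrite /H.
  have := (@h_mono R g (p / q) r0 gs gt (s j) (s j.+1) (ltW (sp j))).
  apply; apply: s_le; exact: leqnSn.
have del0 : forall j, 0 <= del j by case=> [|j]; rewrite /del ?subr0 ?subr_ge0.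
have mE : forall (w : T -> R) t, measurable_fun Omega w ->
    measurable (Eset Omega w t).
  move=> w t mw.
  rewrite /Eset (_ : [set x | Omega x /\ t < `|w x|] =
     Omega `&` ((fun y : R => `|y|) \o w) @^-1` `]t, +oo[); last first.
    by apply/seteqP; split => x /=; rewrite in_itv /= andbT.
  have mn := measurableT_comp (@normr_measurable R _) mw.
  exact: (mn mO _ (measurable_itv _)).
have mS : forall j, measurable (S j) by move=> j; apply: measurableU; exact: mE.
have SO : forall j, S j `<=` Omega by move=> j x [[]|[]].
have mguv := @meas_guv R d T Omega g u v mO mu_ mv v0 gs gt gLs.
pose F := fun x => (g (u x) (v x) * phi x)%:E.
have mF : measurable_fun Omega F.
  by apply/measurable_EFinP; apply: measurable_funM.
have F0 : forall x, Omega x -> (0 <= F x)%E.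
  by move=> x Ox; rewrite lee_fin mulr_ge0 // ?g0 ?v0 // ltW // phi0.
set A := (X in (_ <= \int[mu]_(x in X) _ + _)%E).
have AO : A `<=` Omega by move=> x [[]].
have mA : measurable A.
  apply: measurableI; first apply: measurableI => //.
  - by apply: measurableD => //; exact: mE.
  - by apply: measurableD => //; exact: mE.
pose B := Omega `\` A.
have mB : measurable B by exact: measurableD.
rewrite (eq_integral F); last first.
  move=> x; rewrite inE => Ox.
  by rewrite /F ger0_norm // g0 // v0.
have -> : (\int[mu]_(x in Omega) F x = \int[mu]_(x in A `|` B) F x)%E.
  by rewrite /B setDUK.
rewrite ge0_integral_setU //; last 3 first.
- by rewrite /B setDUK.
- by move=> x; rewrite /B setDUK //; exact: F0.
- by rewrite disj_set2E /B setDIK.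
apply: leeD2l.
pose fj := fun (j : nat) x => (del j * \1_(S j) x * phi x)%:E.
have fj0 : forall j x, Omega x -> (0 <= fj j x)%E.
  move=> j x Ox; rewrite lee_fin; apply: mulr_ge0; last exact: ltW (phi0 _ Ox).
  apply: mulr_ge0; first exact: del0.
  by rewrite indicE; case: (_ \in _).
have mfj : forall j, measurable_fun Omega (fj j).
  move=> j; apply/measurable_EFinP; apply: measurable_funM => //.
  by apply: measurable_funM => //; exact: (measurable_indic (mS j)).
have mSum : forall D, measurable D -> D `<=` Omega ->
    measurable_fun D (fun x => (\sum_(j <oo) fj j x)%E).
  move=> D mD DO.
  exact: (@ge0_emeasurable_sum _ _ _ D fj xpredT
    (fun k x Dx _ => fj0 k x (DO x Dx)) (fun k _ => measurable_funS mO DO (mfj k))).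
have tele : forall K, \sum_(0 <= j < K.+1) del j = H K.+1.
  elim=> [|K IH]; first by rewrite big_nat1 /del subr0.
  by rewrite big_nat_recr //= IH /del addrC subrK.
have pw : forall x, B x -> (F x <= \sum_(j <oo) fj j x)%E.
  move=> x [Ox nAx].
  have S0x : S 0%N x.
    rewrite /S s0E.
    case: (pselect (Eset Omega u s0 x)) => [h|h]; first by left.
    case: (pselect (Eset Omega v (s0 `^ (p / q)) x)) => [h'|h']; first by right.
    by exfalso; apply: nAx; split; [split|] => //; split.
  have exK : exists K, ~~ `[< S K x >].
    have [K hK] := s_unb (Num.max `|u x| (v x `^ (q / p))).
    exists K; apply/negP => /asboolP [[_ h]|[_ h]].
    - have : `|u x| <= Num.max `|u x| (v x `^ (q / p)) by rewrite le_max lexx.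
      move=> h2; have := lt_le_trans h h2; have := lt_trans (lt_le_trans h h2) hK.
      by rewrite ltxx.
    - have h2 : v x `^ (q / p) < s K.
        by apply: le_lt_trans hK; rewrite le_max lexx orbT.
      have vE : v x = (v x `^ (q / p)) `^ (p / q).
        rewrite -powRrM (_ : q / p * (p / q) = 1) ?powRr1 //; last first.
          by field; rewrite !gt_eqF.
        exact: v0.
      have h3 : (v x `^ (q / p)) `^ (p / q) <= s K `^ (p / q).
        have := @ge0_ler_powR R _ r0 (v x `^ (q / p)) (s K).
        rewrite !nnegrE powR_ge0 (ltW (sp K)) => /(_ isT isT (ltW h2)).
        by [].
      rewrite -vE in h3; rewrite ger0_norm in h; last exact: v0.
      by have := lt_le_trans h h3; rewrite ltxx.
  case: (ex_minnP exK) => K hK minK.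
  have Sj : forall j, (j < K)%N -> S j x.
    move=> j jK; apply: contrapT => nS.
    have := minK j; rewrite (_ : ~~ `[< S j x >] = true); last first.
      by apply/negP => /asboolP.
    by move=> /(_ isT); rewrite leqNgt jK.
  have K0 : (0 < K)%N.
    rewrite lt0n; apply/negP => /eqP K0; move: hK; rewrite K0.
    by move/negP; apply; apply/asboolP.
  rewrite (nneseries_split 0%N K); last by move=> j _; exact: fj0.
  rewrite add0n.
  have tail0 : (0 <= \sum_(K <= j <oo) fj j x)%E.
    by apply: nneseries_ge0 => j _ _; exact: fj0.
  apply: (le_trans _ (leeDl _ tail0)).
  have -> : (\sum_(0 <= j < K) fj j x = (H K * phi x)%:E)%E.
    rewrite /fj sumEFin; congr EFin.
    rewrite (eq_big_nat _ _ (F2 := fun j => del j * phi x)); last first.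
      move=> j /andP[_ jK]; rewrite indicE mem_set ?mulr1 //; exact: Sj.
    rewrite -big_distrl /=; congr (_ * _).
    by rewrite -(prednK K0) tele.
  rewrite /F lee_fin ler_wpM2r //; first exact: ltW (phi0 _ Ox).
  have nSK : ~ S K x by move=> h; move/negP: hK; apply; apply/asboolP.
  have nu : ~ (s K < `|u x|) by move=> h; apply: nSK; left.
  have nv : ~ (s K `^ (p / q) < v x).
    by move=> h; apply: nSK; right; split => //; rewrite ger0_norm // v0.
  move/negP: nu; rewrite -leNgt => nu.
  move/negP: nv; rewrite -leNgt => nv.
  apply: (le_trans (gs _ _ _ (v0 _ Ox) (le_trans (ler_norm _) nu))).
  exact: gt (v0 _ Ox) nv.
have BO : B `<=` Omega by move=> x [].
apply: (@le_trans _ _ (\int[mu]_(x in B) \sum_(j <oo) fj j x)%E).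
  apply: ge0_le_integral => //.
  - by move=> x /BO; exact: F0.
  - exact: measurable_funS mF.
  - exact: mSum.
apply: (le_trans (ge0_subset_integral _ _ _ _ _ BO)) => //.
- exact: mSum.
- by move=> x Ox; apply: nneseries_ge0 => j _ _; exact: fj0.
rewrite integral_nneseries //.
have step1 : forall j, (\int[mu]_(x in Omega) fj j x <=
                        ((Cu + Cv) * (del j * a j))%:E)%E.
  move=> j.
  have ephi : (\int[mu]_(x in Omega) fj j x =
               (del j)%:E * \int[mu]_(x in S j) (phi x)%:E)%E.
    rewrite /fj.
    under eq_integral do rewrite -mulrA EFinM.
    have f10 : forall x, Omega x -> (0 <= (\1_(S j) x * phi x)%:E)%E.
      move=> x Ox; rewrite lee_fin; apply: mulr_ge0; last exact: ltW (phi0 _ Ox).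
      by rewrite indicE; case: (_ \in _).
    have mf1 : measurable_fun Omega (fun x => (\1_(S j) x * phi x)%:E).
      apply/measurable_EFinP; apply: measurable_funM => //.
    rewrite (ge0_integralZl_EFin _ mO f10 mf1 (del0 j)).
    congr (_ * _)%E.
    rewrite -[in RHS](setIidr (SO j)) integral_mkcondr.
    apply: eq_integral => x _.
    rewrite /patch indicE; case: (x \in S j) => /=; rewrite ?mul1r ?mul0r //.
  have -> : (Cu + Cv) * (del j * a j) = del j * ((Cu + Cv) * a j) by ring.
  rewrite ephi EFinM; apply: lee_wpmul2l; first by rewrite lee_fin del0.
  pose E1 := Eset Omega u (s j).
  pose E2 := Eset Omega v (s j `^ (p / q)).
  have mE1 : measurable E1 by exact: mE.
  have mE2 : measurable E2 by exact: mE.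
  have mphiE : forall D, measurable D -> D `<=` Omega ->
      measurable_fun D (EFin \o phi).
    by move=> D mD DO; apply/measurable_EFinP; exact: measurable_funS mphi.
  have phiE0 : forall D, D `<=` Omega -> forall x, D x -> (0 <= (phi x)%:E)%E.
    by move=> D DO x /DO Ox; rewrite lee_fin ltW // phi0.
  have E12O : E1 `|` E2 `<=` Omega by move=> x [[]|[]].
  rewrite /S -/E1 -/E2 -(setDUK (@subsetUl _ E1 E2)).
  have mD2 : measurable ((E1 `|` E2) `\` E1).
    by apply: measurableD => //; exact: measurableU.
  have mf12 : measurable_fun (E1 `|` ((E1 `|` E2) `\` E1)) (EFin \o phi).
    by rewrite setDUK //; apply: mphiE => //; exact: measurableU.
  have f12 : forall x, (E1 `|` ((E1 `|` E2) `\` E1)) x -> (0 <= (phi x)%:E)%E.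
    by rewrite setDUK //; exact: phiE0.
  have dis : [disjoint E1 & (E1 `|` E2) `\` E1] by rewrite disj_set2E setDIK.
  rewrite (ge0_integral_setU mu mE1 mD2 mf12 f12 dis).
  have h1 : (\int[mu]_(x in E1) (phi x)%:E <= (Cu * a j)%:E)%E by exact: (eu _ (sp j)).
  have h2 : (\int[mu]_(x in (E1 `|` E2) `\` E1) (phi x)%:E <= (Cv * a j)%:E)%E.
    apply: (@le_trans _ _ (\int[mu]_(x in E2) (phi x)%:E)%E).
      have E2O : E2 `<=` Omega by move=> x [].
      apply: (ge0_subset_integral mu mD2 mE2 (mphiE _ mE2 E2O) (phiE0 _ E2O)).
      move=> x [[h|h] nh]; [exact: (False_ind _ (nh h)) | exact: h].
    apply: (le_trans (ev _ (powR_gt0 _ (sp j)))).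
    have pq : p / q * - q = - p by field; exact: lt0r_neq0.
    rewrite lee_fin; apply: ler_wpM2l; first exact: ltW.
    by rewrite /a -powRrM pq.
  by rewrite mulrDl EFinD; exact: leeD.
apply: (@le_trans _ _ (\sum_(j <oo) ((Cu + Cv) * (del j * a j))%:E)%E).
  apply: lee_nneseries.
  - by move=> j _ _; apply: integral_ge0 => x Ox; exact: fj0.
  - by move=> j _; exact: step1.
under eq_eseriesr do rewrite EFinM.
rewrite nneseriesZl; last by move=> j _; rewrite lee_fin mulr_ge0.
have -> : (2 * p * (Cu + Cv))%:E = ((Cu + Cv)%:E * (2 * p)%:E)%E.
  by rewrite -EFinM mulrC.
rewrite -muleA; apply: lee_wpmul2l; first by rewrite lee_fin addr_ge0 // ltW.
apply: (le_trans (@abel R H a H0 Hnd a0 _)); first by move=> j; exact: aS.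
pose I (j : nat) := `[s j, s j.+1[%classic.
have mI : forall j, measurable (I j) by move=> j; exact: measurable_itv.
have sS : forall j, s j < s j.+1.
  move=> j; have -> : s j.+1 = s j * c2 by rewrite /s exprSr mulrA.
  by rewrite ltr_pMr ?sp.
have s0le : forall j, s0 <= s j by move=> j; rewrite -s0E; exact: s_le.
have IO : forall j, I j `<=` `[s0, +oo[%classic.
  move=> j x; rewrite /I /= !in_itv /= andbT => /andP[h _].
  exact: le_trans (s0le j) h.
have pos0 : forall D, D `<=` `[s0, +oo[%classic -> forall x, D x -> 0 <= x.
  move=> D DO x /DO; rewrite /= in_itv /= andbT => h.
  exact: le_trans (ltW s00) h.
have mk : forall D, measurable D -> D `<=` `[s0, +oo[%classic ->
    measurable_fun D (fun t => (t `^ (-1 - p) * g t (t `^ (p / q)))%:E).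
  move=> D mD DO; apply/measurable_EFinP.
  exact: (@meas_k R g p q D mD (pos0 D DO) p0 q0 gs gt).
have k0 : forall D, D `<=` `[s0, +oo[%classic -> forall t, D t ->
    (0 <= (t `^ (-1 - p) * g t (t `^ (p / q)))%:E)%E.
  move=> D DO t Dt; rewrite lee_fin; apply: mulr_ge0; first exact: powR_ge0.
  by apply: g0; exact: powR_ge0.
have termj : forall j, ((H j * a j)%:E <= (2 * p)%:E *
    \int[lebesgue_measure]_(t in I j) (t `^ (-1 - p) * g t (t `^ (p / q)))%:E)%E.
  move=> j.
  have -> : H j * a j = (2 * p) * (H j * ((a j - a j.+1) / p)).
    have aS' : a j = 2 * a j.+1 by exact: aS.
    rewrite aS'; field; exact: lt0r_neq0.
  rewrite EFinM; apply: lee_wpmul2l; first by rewrite lee_fin mulr_ge0 // ltW.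
  rewrite /a EFinM -(@int_powR R p (s j) (s j.+1) p0 (sp j) (sS j)).
  have f10 : forall x, I j x -> (0 <= (x `^ (-1 - p))%:E)%E.
    by move=> x _; rewrite lee_fin powR_ge0.
  have mf1 : measurable_fun (I j) (fun x : R => (x `^ (-1 - p))%:E).
    by apply/measurable_EFinP; exact: measurable_funS (measurable_powR _).
  have E := ge0_integralZl_EFin lebesgue_measure (mI j) f10 mf1 (H0 j).
  rewrite /I /= in E; rewrite -E.
  have f10' : forall x, I j x -> (0 <= (H j)%:E * (x `^ (-1 - p))%:E)%E.
    by move=> x _; rewrite -EFinM lee_fin mulr_ge0 // powR_ge0.
  have mf1' : measurable_fun (I j) (fun x : R => ((H j)%:E * (x `^ (-1 - p))%:E)%E).
    apply: emeasurable_funM => //; exact: measurable_cst.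
  rewrite -/(I j).
  have L := ge0_le_integral lebesgue_measure (mI j) f10' mf1' (mk _ (mI j) (IO j)).
  apply: L.
  move=> x; rewrite /I /= in_itv /= => /andP[sx _].
  rewrite -EFinM lee_fin mulrC ler_wpM2l ?powR_ge0 //.
  apply: (@h_mono R g (p / q) r0 gs gt (s j) x (ltW (sp j)) sx).
have int0 : forall j, (0 <= \int[lebesgue_measure]_(t in I j)
     (t `^ (-1 - p) * g t (t `^ (p / q)))%:E)%E.
  by move=> j; apply: integral_ge0; exact: k0 (IO j).
apply: (@le_trans _ _ (\sum_(j <oo) ((2 * p)%:E *
    \int[lebesgue_measure]_(t in I j) (t `^ (-1 - p) * g t (t `^ (p / q)))%:E))%E).
  apply: lee_nneseries.
  - by move=> j _ _; rewrite lee_fin mulr_ge0.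
  - by move=> j _; exact: termj.
rewrite nneseriesZl; last by move=> j _; exact: int0.
apply: lee_wpmul2l; first by rewrite lee_fin mulr_ge0 // ltW.
have UO : \bigcup_j I j `<=` `[s0, +oo[%classic by move=> x [j _ /IO].
have tI : trivIset setT I.
  move=> i j _ _ [x [xi xj]].
  move: xi xj; rewrite /I /= !in_itv /= => /andP[si1 si2] /andP[sj1 sj2].
  have [ij|ji|//] := ltngtP i j.
  - have := s_le i.+1 j ij; clear ij; move=> h; exfalso; lra.
  - have := s_le j.+1 i ji; clear ji; move=> h; exfalso; lra.
rewrite -(@ge0_integral_bigcup _ _ _ lebesgue_measure I); last 4 first.
- exact: mI.
- exact: mk (bigcupT_measurable _ mI) UO.
- exact: k0 UO.
- exact: tI.
have mitv : measurable (`[s0, +oo[%classic : set R) by exact: measurable_itv.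
have L := ge0_subset_integral lebesgue_measure (bigcupT_measurable _ mI) mitv
  (mk _ mitv (fun x h => h)) (k0 _ (fun x h => h)) UO.
exact: L.
Qed.
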